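(* Fix a monomial order on $S$. Let $J$ be an ideal of $S$, $\mathcal G_J$ a Gröbner basis of $J$, and $(E_i)_{i\in\Lambda}$ a family of ideals of $S$ each of which is S-nice with respect to $\mathcal G_J$. Then: (a) $\bigcap_{i\in\Lambda}E_i$ is S-nice with respect to $\mathcal G_J$; (b) if moreover $(E_i,E_j)$ is a G-nice pair for all $i,j\in\Lambda$, then $\sum_{i\in\Lambda}E_i$ is S-nice with respect to $\mathcal G_J$.
   Context: $K$ is a field and $S=K[x_1,\ldots,x_n]$ with a fixed monomial order. For $0\neq f\in S$, $\mathrm{in}(f)$ denotes its leading monomial and $\mathrm{LT}(f)$ its leading term; for an ideal $I$, $\mathrm{in}(I)$ is the ideal generated by the leading monomials of the nonzero elements of $I$. A pair $(J,E)$ of ideals is G-nice if $\mathrm{in}(J+E)=\mathrm{in}(J)+\mathrm{in}(E)$. For nonzero $f,g\in S$ the S-polynomial is $S(f,g)=\frac{\mathrm{lcm}(\mathrm{in}(f),\mathrm{in}(g))}{\mathrm{LT}(f)}f-\frac{\mathrm{lcm}(\mathrm{in}(f),\mathrm{in}(g))}{\mathrm{LT}(g)}g$. Given a Gröbner basis $\mathcal G_J$ of an ideal $J$, an ideal $E$ is called S-nice with respect to $\mathcal G_J$ if $S(f,g)\in E$ for all $f\in\mathcal G_J$ and all nonzero $g\in E$. *)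

(* Defs.v *)
From HB Require Import structures.
From mathcomp Require Import all_boot all_order all_algebra.
From mathcomp Require Import mpoly.

Set Implicit Arguments.
Unset Strict Implicit.
Unset Printing Implicit Defensive.

Import GRing.Theory.
Local Open Scope ring_scope.

Section GB.
Variables (K : fieldType) (n : nat).

Local Notation mono := ('X_{1..n}).
Local Notation poly := ({mpoly K[n]}).

Definition monomial_order (le : rel mono) : Prop :=
  [/\ reflexive le, antisymmetric le, transitive le & total le] /\
  (forall m1 m2 m, le m1 m2 -> le (m1 + m)%MM (m2 + m)%MM) /\
  well_founded (fun a b => le a b && (a != b)).

(* in(f): the largest monomial of the support of f w.r.t. le (0 if f = 0). *)
Definition lmono (le : rel mono) (f : poly) : mono :=
  foldr (fun m acc => if le acc m then m else acc) 0%MM (msupp f).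

Definition lcoef (le : rel mono) (f : poly) : K := f@_(lmono le f).

Definition spoly (le : rel mono) (f g : poly) : poly :=
  let l := mlcm (lmono le f) (lmono le g) in
  ((lcoef le f)^-1 *: 'X_[(l - lmono le f)%MM]) * f
  - ((lcoef le g)^-1 *: 'X_[(l - lmono le g)%MM]) * g.

Definition pset := poly -> Prop.

Definition is_ideal (I : pset) : Prop :=
  [/\ I 0, (forall f g, I f -> I g -> I (f + g)) & (forall r f, I f -> I (r * f))].

Definition pset_eq (A B : pset) : Prop := forall f, A f <-> B f.

Definition ideal_gen (A : pset) : pset :=
  fun f => exists s : seq (poly * poly),
    (forall p, p \in s -> A p.2) /\ f = \sum_(p <- s) p.1 * p.2.

Definition initial_ideal (le : rel mono) (I : pset) : pset :=
  ideal_gen (fun m => exists f, [/\ I f, f != 0 & m = 'X_[lmono le f]]).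

Definition ideal_add (I E : pset) : pset := ideal_gen (fun f => I f \/ E f).

Definition ideal_bigsum (L : Type) (E : L -> pset) : pset :=
  ideal_gen (fun f => exists i, E i f).
Definition ideal_bigcap (L : Type) (E : L -> pset) : pset :=
  fun f => forall i, E i f.

Definition G_nice (le : rel mono) (J E : pset) : Prop :=
  pset_eq (initial_ideal le (ideal_add J E))
          (ideal_add (initial_ideal le J) (initial_ideal le E)).

Definition groebner_basis (le : rel mono) (J : pset) (G : seq poly) : Prop :=
  (forall g, g \in G -> J g /\ g != 0) /\
  pset_eq (initial_ideal le J)
          (ideal_gen (fun m => exists2 g, g \in G & m = 'X_[lmono le g])).

Definition S_nice (le : rel mono) (G : seq poly) (E : pset) : Prop :=
  forall f g, f \in G -> E g -> g != 0 -> E (spoly le f g).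

End GB.

(* Main.v *)
Require Import Defs.
From HB Require Import structures.
From mathcomp Require Import all_boot all_order all_algebra.
From mathcomp Require Import mpoly.
From mathcomp Require Import ring.
Set Implicit Arguments. Unset Strict Implicit. Unset Printing Implicit Defensive.
Import GRing.Theory.
Local Open Scope ring_scope.

Section Mono.
Variables (K : fieldType) (n : nat) (le : rel 'X_{1..n}).
Hypothesis Hle : monomial_order le.
Local Notation mono := 'X_{1..n}.
Local Notation poly := {mpoly K[n]}.

Definition lt (a b : mono) := le a b && (a != b).

Lemma le_refl m : le m m.
Proof. by case: Hle => -[]. Qed.
Lemma le_anti a b : le a b -> le b a -> a = b.
Proof. case: Hle => -[_ H _ _] _ ? ?; apply: H; exact/andP. Qed.
Lemma le_trans a b c : le a b -> le b c -> le a c.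
Proof. case: Hle => -[_ _ H _] _ ab bc; exact: H ab bc. Qed.
Lemma le_total a b : le a b || le b a.
Proof. by case: Hle => -[_ _ _ H] _. Qed.
Lemma le_addr a b m : le a b -> le (a + m)%MM (b + m)%MM.
Proof. by case: Hle => _ [H _]; apply: H. Qed.
Lemma le_addl a b m : le a b -> le (m + a)%MM (m + b)%MM.
Proof. by rewrite ![(m + _)%MM]addmC; apply: le_addr. Qed.
Lemma lt_wf : well_founded lt.
Proof. by case: Hle => _ [_ H]. Qed.

Lemma le0m m : le 0%MM m.
Proof.
case/orP: (le_total 0%MM m) => // H.
have [->|nz] := eqVneq m 0%MM; first exact: le_refl.
exfalso.
have step : forall y, lt (m + y)%MM y.
  move=> y; rewrite /lt; apply/andP; split.
    by rewrite -{2}[y]add0m; apply: le_addr.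
  by rewrite -{2}[y]add0m eqm_add2r.
have: forall x, ~ Acc lt x.
  move=> x A; elim: A => z _ IH; exact: (IH _ (step z)).
by move/(_ 0%MM); apply; apply: lt_wf.
Qed.

Lemma lt_trans_le a b c : lt a b -> le b c -> lt a c.
Proof.
case/andP=> ab nab bc; apply/andP; split; first exact: le_trans ab bc.
apply/eqP=> E; subst c; move/eqP: nab; apply; exact: le_anti.
Qed.
Lemma le_trans_lt a b c : le a b -> lt b c -> lt a c.
Proof.
move=> ab /andP[bc nbc]; apply/andP; split; first exact: le_trans ab bc.
apply/eqP=> E; subst c; move/eqP: nbc; apply; exact: le_anti.
Qed.

Lemma foldr_max (s : seq mono) :
  let r := foldr (fun m acc => if le acc m then m else acc) 0%MM s in
  (forall m, m \in s -> le m r) /\ (s != [::] -> r \in s).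
Proof.
elim: s => [|x s [IH1 IH2]] /=; first by split.
set r := foldr _ _ s in IH1 IH2 *.
case: ifP => H; split.
- move=> m; rewrite inE => /orP[/eqP ->|ms]; first exact: le_refl.
  exact: le_trans (IH1 _ ms) H.
- by rewrite inE eqxx.
- move=> m; rewrite inE => /orP[/eqP ->|ms]; last exact: IH1.
  by case/orP: (le_total r x) => //; rewrite H.
- move=> _; case: (eqVneq s [::]) => [sE|sne].
    by move: H; rewrite /r sE /= le0m.
  by rewrite inE IH2 ?orbT.
Qed.

Lemma lmono_max (p : poly) m : m \in msupp p -> le m (lmono le p).
Proof. by case: (foldr_max (msupp p)) => H _; apply: H. Qed.

Lemma lmono_supp (p : poly) : p != 0 -> lmono le p \in msupp p.
Proof.
move=> nz; case: (foldr_max (msupp p)) => _ H; apply: H.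
by rewrite msupp_eq0.
Qed.

Definition ub (M : mono) (p : poly) := forall m, m \in msupp p -> le m M.
Definition sb (M : mono) (p : poly) := forall m, m \in msupp p -> lt m M.

Lemma ub_lmono p : ub (lmono le p) p.
Proof. move=> m; exact: lmono_max. Qed.
Lemma ub_lmono_le M p : p != 0 -> ub M p -> le (lmono le p) M.
Proof. by move=> nz H; apply: H; apply: lmono_supp. Qed.
Lemma ub_mono M M' p : ub M p -> le M M' -> ub M' p.
Proof. by move=> H l m /H /le_trans; apply. Qed.
Lemma ub_lt_sb M M' p : ub M p -> lt M M' -> sb M' p.
Proof. by move=> H l m /H /le_trans_lt; apply. Qed.
Lemma sb_mono M M' p : sb M p -> le M M' -> sb M' p.
Proof. by move=> H l m /H /lt_trans_le; apply. Qed.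
Lemma sb_ub M p : sb M p -> ub M p.
Proof. by move=> H m /H /andP[]. Qed.
Lemma ub0 M : ub M (0 : poly).
Proof. by move=> m; rewrite mcoeff_msupp mcoeff0 eqxx. Qed.
Lemma sb0 M : sb M (0 : poly).
Proof. by move=> m; rewrite mcoeff_msupp mcoeff0 eqxx. Qed.
Lemma ubD M p q : ub M p -> ub M q -> ub M (p + q).
Proof. by move=> Hp Hq m /msuppD_le; rewrite mem_cat => /orP[/Hp|/Hq]. Qed.
Lemma sbD M p q : sb M p -> sb M q -> sb M (p + q).
Proof. by move=> Hp Hq m /msuppD_le; rewrite mem_cat => /orP[/Hp|/Hq]. Qed.
Lemma ubB M p q : ub M p -> ub M q -> ub M (p - q).
Proof. by move=> Hp Hq m /msuppB_le; rewrite mem_cat => /orP[/Hp|/Hq]. Qed.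
Lemma ubZ M c p : ub M p -> ub M (c *: p).
Proof. by move=> Hp m /msuppZ_le /Hp. Qed.
Lemma ubMX M u p : ub M p -> ub (u + M)%MM (p * 'X_[u]).
Proof.
move=> Hp m; rewrite (perm_mem (msuppMX p u)) => /mapP[m' /Hp H ->].
exact: le_addl.
Qed.
Lemma ub_coef0 M p : ub M p -> p@_M = 0 -> sb M p.
Proof.
move=> H c m mp; apply/andP; split; first exact: H.
by apply/eqP=> E; move: mp; rewrite E mcoeff_msupp c eqxx.
Qed.
Lemma sb_coef M p : sb M p -> p@_M = 0.
Proof.
move=> H; apply/eqP; rewrite mcoeff_eq0; apply/negP=> /H.
by rewrite /lt eqxx andbF.
Qed.
Lemma sb_lt M p : sb M p -> p != 0 -> lt (lmono le p) M.
Proof. by move=> H nz; apply: H; apply: lmono_supp. Qed.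
Lemma ub_coef_lmono M p : ub M p -> p@_M != 0 -> lmono le p = M.
Proof.
move=> H c; have nz : p != 0 by apply: contraNneq c => ->; rewrite mcoeff0.
apply: le_anti; first exact: ub_lmono_le.
by apply: lmono_max; rewrite mcoeff_msupp.
Qed.


Lemma ideal_gen_ind (A P : pset K n) :
  P 0 -> (forall f g, P f -> P g -> P (f + g)) -> (forall r f, P f -> P (r * f)) ->
  (forall f, A f -> P f) -> forall f, ideal_gen A f -> P f.
Proof.
move=> P0 PD PM PA f [s [Hs ->]]; elim: s Hs => [|[r g] s IH] Hs; first by rewrite big_nil.
rewrite big_cons; apply: PD.
  by apply: PM; apply: PA; apply: (Hs (r,g)); rewrite inE eqxx.
by apply: IH => p ps; apply: Hs; rewrite inE ps orbT.
Qed.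

Lemma ideal_gen_ideal (A : pset K n) : is_ideal (ideal_gen A).
Proof.
split.
- by exists [::]; split => //; rewrite big_nil.
- move=> f g [s [Hs ->]] [t [Ht ->]]; exists (s ++ t); split; last by rewrite big_cat.
  by move=> p; rewrite mem_cat => /orP[/Hs|/Ht].
- move=> r f [s [Hs ->]]; exists [seq (r * p.1, p.2) | p <- s]; split.
    by move=> p /mapP[q qs ->] /=; apply: Hs.
  by rewrite big_map mulr_sumr; apply: eq_bigr => p _; rewrite mulrA.
Qed.

Lemma ideal_gen_in (A : pset K n) f : A f -> ideal_gen A f.
Proof.
move=> Af; exists [:: (1, f)]; split; first by move=> p; rewrite inE => /eqP ->.
by rewrite big_seq1 mul1r.
Qed.

Lemma ideal0 (I : pset K n) : is_ideal I -> I 0.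
Proof. by case. Qed.
Lemma idealD (I : pset K n) f g : is_ideal I -> I f -> I g -> I (f + g).
Proof. by case=> _ H _; apply: H. Qed.
Lemma idealM (I : pset K n) r f : is_ideal I -> I f -> I (r * f).
Proof. by case=> _ _ H; apply: H. Qed.
Lemma idealB (I : pset K n) f g : is_ideal I -> I f -> I g -> I (f - g).
Proof.
move=> HI Hf Hg; rewrite -mulN1r; apply: idealD => //; exact: idealM.
Qed.
Lemma idealZX (I : pset K n) c u h : is_ideal I -> I h -> I (c *: (h * 'X_[u])).
Proof.
move=> HI Hh; have -> : c *: (h * 'X_[u]) = (c%:MP * 'X_[u]) * h.
  by rewrite -mul_mpolyC; ring.
exact: idealM.
Qed.

Variables (L : Type) (E : L -> pset K n).
Hypothesis HE : forall i, is_ideal (E i).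

Lemma D2 a b ea eb : G_nice le (E a) (E b) -> E a ea -> E b eb -> ea + eb != 0 ->
  exists h, [/\ E a h \/ E b h, h != 0 & (lmono le h <= lmono le (ea + eb))%MM].
Proof.
move=> HN Ha Hb nz.
set s := ea + eb.
have H1 : initial_ideal le (ideal_add (E a) (E b)) 'X_[lmono le s].
  apply: ideal_gen_in; exists s; split => //.
  by apply: idealD; [exact: ideal_gen_ideal| apply: ideal_gen_in; left | apply: ideal_gen_in; right].
move/HN: H1.
pose P (q : poly) := forall m, m \in msupp q ->
   exists h, [/\ E a h \/ E b h, h != 0 & (lmono le h <= m)%MM].
have P0 : P 0 by move=> m; rewrite mcoeff_msupp mcoeff0 eqxx.
have PD : forall f g, P f -> P g -> P (f + g).
  by move=> f g Pf Pg m /msuppD_le; rewrite mem_cat => /orP[/Pf|/Pg].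
have PM : forall r f, P f -> P (r * f).
  move=> r f Pf m /msuppM_le /allpairsP[[m1 m2] [_ /Pf [h [H1 H2 H3]] ->]] /=.
  exists h; split => //; exact: (lepm_trans H3 (lem_addl _ _)).
have Pin : forall (I : pset K n), (forall h, I h -> E a h \/ E b h) ->
    forall q, initial_ideal le I q -> P q.
  move=> I HI; apply: ideal_gen_ind => // _ [h [Ih nzh ->]] m.
  rewrite msuppX inE => /eqP ->.
  by exists h; split => //; [exact: HI | exact: lepm_refl].
move=> Hq; have := ideal_gen_ind P0 PD PM _ Hq; apply.
- by move=> f [Hf|Hf]; [apply: (Pin (E a)) Hf; left | apply: (Pin (E b)) Hf; right].
- by rewrite msuppX inE.
Qed.

Lemma PS a b : G_nice le (E a) (E b) -> forall N ea eb, E a ea -> E b eb -> ub N (ea + eb) ->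
  exists e ea' eb', [/\ E a e \/ E b e, ub N e, E a ea' /\ sb N ea',
     E b eb' /\ sb N eb' & ea + eb = e + ea' + eb'].
Proof.
move=> HN N; elim/(well_founded_induction lt_wf): N => N IH ea eb Ha Hb HsN.
have red : forall xa xb, E a xa -> E b xb -> sb N (xa + xb) ->
    exists ya yb, [/\ E a ya /\ sb N ya, E b yb /\ sb N yb & xa + xb = ya + yb].
  move=> xa xb Hxa Hxb Hx.
  have [x0|nzx] := eqVneq (xa + xb) 0.
    exists 0, 0; rewrite x0 addr0; split => //; split; (exact: ideal0 || exact: sb0).
  have lt1 := sb_lt Hx nzx.
  have /andP[le1 _] := lt1.
  have [e1 [ea1 [eb1 [He1 ue1 [Ha1 sa1] [Hb1 sb1] Ex1]]]] :=
    IH _ lt1 xa xb Hxa Hxb (@ub_lmono (xa + xb)).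
  have ue1' := ub_lt_sb ue1 lt1.
  have sa1' := sb_mono sa1 le1.
  have sb1' := sb_mono sb1 le1.
  case: He1 => He1.
    exists (e1 + ea1), eb1; split => //; first by split; [exact: idealD | exact: sbD].
  exists ea1, (e1 + eb1); split => //; first by split; [exact: idealD | exact: sbD].
  by rewrite Ex1; ring.
have [c0|cn0] := eqVneq (ea + eb)@_N 0.
  have [ya [yb [[Hya sya] [Hyb syb] Ey]]] := red _ _ Ha Hb (ub_coef0 HsN c0).
  exists 0, ya, yb; split => //; [left; exact: ideal0 | exact: ub0 | by rewrite add0r].
have nzs : ea + eb != 0 by apply: contraNneq cn0 => ->; rewrite mcoeff0.
have lmN := ub_coef_lmono HsN cn0.
have [h [Hh nzh hdiv]] := D2 HN Ha Hb nzs.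
rewrite lmN in hdiv.
set b0 := lmono le h in hdiv.
set u := (N - b0)%MM.
have uN : (u + b0)%MM = N by rewrite submK.
set c := (ea + eb)@_N / h@_b0.
have hb0 : h@_b0 != 0 by rewrite -mcoeff_msupp; apply: lmono_supp.
set t := c *: (h * 'X_[u]).
have ubt : ub N t by apply: ubZ; rewrite -uN; apply: ubMX; exact: ub_lmono.
have ct : t@_N = (ea + eb)@_N.
  by rewrite mcoeffZ -{1}uN mcoeffMX /c (divfK hb0).
have sx : sb N (ea + eb - t).
  apply: ub_coef0; first exact: ubB.
  by rewrite mcoeffB ct subrr.
have fin : forall ya yb, ea + eb - t = ya + yb -> ea + eb = t + ya + yb.
  by move=> ya yb Ey; rewrite -addrA -Ey; ring.
case: Hh => Hh.
  have Ht : E a t by apply: idealZX.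
  have sx' : sb N (ea - t + eb) by rewrite addrAC.
  have [ya [yb [[Hya sya] [Hyb syb] Ey]]] := red (ea - t) eb (idealB (HE a) Ha Ht) Hb sx'.
  exists t, ya, yb; split => //; first by left.
  by apply: fin; rewrite -Ey addrAC.
have Ht : E b t by apply: idealZX.
have sx' : sb N (ea + (eb - t)) by rewrite addrA.
have [ya [yb [[Hya sya] [Hyb syb] Ey]]] := red ea (eb - t) Ha (idealB (HE b) Hb Ht) sx'.
exists t, ya, yb; split => //; first by right.
by apply: fin; rewrite -Ey addrA.
Qed.

Lemma sum_coef M (l : seq poly) : (\sum_(g <- l) g)@_M = \sum_(g <- l) g@_M.
Proof. elim: l => [|g l IH]; first by rewrite !big_nil mcoeff0.
by rewrite !big_cons mcoeffD IH. Qed.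

Lemma ub_sum M (l : seq poly) : (forall g, g \in l -> ub M g) -> ub M (\sum_(g <- l) g).
Proof.
elim: l => [|g l IH] H; first by rewrite big_nil; exact: ub0.
rewrite big_cons; apply: ubD; first by apply: H; exact: mem_head.
by apply: IH => x xl; apply: H; rewrite inE xl orbT.
Qed.

Lemma sb_sum M (l : seq poly) : (forall g, g \in l -> sb M g) -> sb M (\sum_(g <- l) g).
Proof.
elim: l => [|g l IH] H; first by rewrite big_nil; exact: sb0.
rewrite big_cons; apply: sbD; first by apply: H; exact: mem_head.
by apply: IH => x xl; apply: H; rewrite inE xl orbT.
Qed.

Lemma ex_ub (l : seq poly) : exists M, forall g, g \in l -> ub M g.
Proof.
elim: l => [|g l [M HM]]; first by exists 0%MM.
case/orP: (le_total M (lmono le g)) => H.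
  exists (lmono le g) => x; rewrite inE => /orP[/eqP->|xl].
    exact: (@ub_lmono g).
  exact: ub_mono (HM _ xl) H.
exists M => x; rewrite inE => /orP[/eqP->|/HM] //.
exact: ub_mono (@ub_lmono g) H.
Qed.

Lemma bound_sb M (l : seq poly) : (forall g, g \in l -> sb M g) ->
  (forall g, g \in l -> g = 0) \/ exists M', lt M' M /\ forall g, g \in l -> ub M' g.
Proof.
elim: l => [|g l IH] Hl; first by left.
have Hg : sb M g by apply: Hl; exact: mem_head.
case: (IH _) => [x xl|Hz|[M' [lt' HM']]]; first by apply: Hl; rewrite inE xl orbT.
- have [->|nzg] := eqVneq g 0.
    by left => x; rewrite inE => /orP[/eqP->|/Hz].
  right; exists (lmono le g); split; first exact: sb_lt.
  move=> x; rewrite inE => /orP[/eqP->|/Hz->]; [exact: (@ub_lmono g) | exact: ub0].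
- have [->|nzg] := eqVneq g 0.
    right; exists M'; split => // x; rewrite inE => /orP[/eqP->|/HM'] //; exact: ub0.
  have ltg : lt (lmono le g) M by exact: sb_lt.
  right; case/orP: (le_total M' (lmono le g)) => H.
    exists (lmono le g); split => // x; rewrite inE => /orP[/eqP->|xl].
      exact: (@ub_lmono g).
    exact: ub_mono (HM' _ xl) H.
  exists M'; split => // x; rewrite inE => /orP[/eqP->|/HM'] //.
  exact: ub_mono (@ub_lmono g) H.
Qed.

Hypothesis HN : forall i j, G_nice le (E i) (E j).

Lemma Red M (l : seq poly) : (forall g, g \in l -> (exists i, E i g) /\ ub M g) ->
  exists e l', [/\ e = 0 \/ (exists i, E i e), ub M e,
     (forall g, g \in l' -> (exists i, E i g) /\ sb M g) &
     \sum_(g <- l) g = e + \sum_(g <- l') g].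
Proof.
elim: l => [|g l IH] Hl.
  exists 0, [::]; split => //; [by left | exact: ub0 | by rewrite !big_nil addr0].
have [[i Hg] ug] := Hl g (mem_head _ _).
case: (IH _) => [x xl|e [l' [He ue Hl' Es]]]; first by apply: Hl; rewrite inE xl orbT.
rewrite big_cons Es.
case: He => [e0|[j Hj]].
  exists g, l'; split => //; [by right; exists i | by rewrite e0 add0r].
have [e2 [ea' [eb' [He2 ue2 [Ha sa] [Hb sb'] E2]]]] := PS (HN i j) Hg Hj (ubD ug ue).
exists e2, [:: ea', eb' & l']; split => //.
- by case: He2 => H; right; [exists i | exists j].
- move=> x; rewrite !inE => /orP[/eqP->|/orP[/eqP->|/Hl' //]].
    by split => //; exists i.
  by split => //; exists j.
- by rewrite !big_cons addrA E2; ring.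
Qed.

Lemma mainP M : forall l : seq poly, (forall g, g \in l -> (exists i, E i g) /\ ub M g) ->
  \sum_(g <- l) g != 0 ->
  exists i h, [/\ E i h, h != 0 & (lmono le h <= lmono le (\sum_(g <- l) g))%MM].
Proof.
elim/(well_founded_induction lt_wf): M => M IH l Hl nz.
have us : ub M (\sum_(g <- l) g) by apply: ub_sum => g /Hl [].
have [c0|cn0] := eqVneq (\sum_(g <- l) g)@_M 0.
  have [e [l' [He ue Hl' Es]]] := Red Hl.
  have sl' : sb M (\sum_(g <- l') g) by apply: sb_sum => g /Hl' [].
  have se : sb M e.
    by apply: ub_coef0 => //; move: c0; rewrite Es mcoeffD (sb_coef sl') addr0.
  have [l2 [Hl2 E2]] : exists l2, (forall g, g \in l2 -> (exists i, E i g) /\ sb M g)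
      /\ \sum_(g <- l) g = \sum_(g <- l2) g.
    case: He => [e0|[j Hj]].
      by exists l'; rewrite Es e0 add0r.
    exists (e :: l'); rewrite big_cons Es; split => // x.
    by rewrite inE => /orP[/eqP->|/Hl' //]; split => //; exists j.
  rewrite E2 in nz *.
  case: (bound_sb (fun g gl => (Hl2 g gl).2)) => [Hz|[M' [lt' HM']]].
    by move: nz; rewrite big1_seq ?eqxx // => g /andP[_ /Hz].
  apply: (IH M' lt') => // g gl; split; [exact: (Hl2 g gl).1 | exact: HM'].
case: (boolP (has (fun g => g@_M != 0) l)) => [/hasP[g gl cg] | /hasPn H]; last first.
  move: cn0; rewrite sum_coef big1_seq ?eqxx // => g /andP[_ /H].
  by rewrite negbK => /eqP.
have [[i Hg] ug] := Hl g gl.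
exists i, g; split => //.
  by apply: contraNneq cg => ->; rewrite mcoeff0.
by rewrite (ub_coef_lmono ug cg) (ub_coef_lmono us cn0); exact: lepm_refl.
Qed.

Lemma Dsum g : ideal_bigsum E g -> g != 0 ->
  exists i h, [/\ E i h, h != 0 & (lmono le h <= lmono le g)%MM].
Proof.
case=> s [Hs Eg] nz.
pose l := [seq p.1 * p.2 | p <- s].
have El : g = \sum_(x <- l) x by rewrite Eg big_map.
have Hl : forall x, x \in l -> exists i, E i x.
  move=> x /mapP[p ps ->]; have [i Hi] := Hs p ps; exists i; exact: idealM.
have [M HM] := ex_ub l.
rewrite El in nz *; apply: (@mainP M) => // x xl; split; [exact: Hl | exact: HM].
Qed.

Variable G : seq poly.
Hypothesis HS : forall i, S_nice le G (E i).

Lemma partb : S_nice le G (ideal_bigsum E).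
Proof.
move=> f g fG Hg nzg.
have [i [h [Hh nzh hg]]] := Dsum Hg nzg.
have Hsp := HS fG Hh nzh.
have IS := ideal_gen_ideal (fun f => exists i, E i f).
have inS : forall x j, E j x -> ideal_bigsum E x.
  by move=> x j Hx; apply: ideal_gen_in; exists j.
rewrite /spoly.
set a := lmono le f; set b := lmono le h; set c := lmono le g.
have alh : (a <= mlcm a b)%MM := lem_mlcml _ _.
have lhlg : (mlcm a b <= mlcm a c)%MM.
  by rewrite lem_mlcm lem_mlcml (lepm_trans hg (lem_mlcmr _ _)).
have key : (lcoef le f)^-1 *: 'X_[(mlcm a c - a)%MM] * f =
   'X_[(mlcm a c - mlcm a b)%MM] * ((lcoef le f)^-1 *: 'X_[(mlcm a b - a)%MM] * f).
  by rewrite mulrA -scalerAr -mpolyXD (addmBA _ alh) (submK lhlg).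
have H1 : E i ((lcoef le f)^-1 *: 'X_[(mlcm a b - a)%MM] * f).
  have -> : (lcoef le f)^-1 *: 'X_[(mlcm a b - a)%MM] * f =
     spoly le f h + (lcoef le h)^-1 *: 'X_[(mlcm a b - b)%MM] * h.
    by rewrite /spoly -/a -/b subrK.
  by apply: idealD => //; exact: idealM.
rewrite key; apply: idealB => //; apply: idealM => //; exact: inS H1.
Qed.

Lemma parta : S_nice le G (ideal_bigcap E).
Proof. by move=> f g fG Hg nzg i; apply: HS. Qed.

End Mono.

Unset Implicit Arguments.
Local Close Scope ring_scope.

Theorem mainTheorem16 (K : fieldType) (n : nat) (le : rel 'X_{1..n})
  (Hle : monomial_order le)
  (J : pset K n) (HJ : is_ideal J) (G : seq {mpoly K[n]})
  (HG : groebner_basis le J G)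
  (L : Type) (E : L -> pset K n)
  (HE : forall i, is_ideal (E i))
  (HS : forall i, S_nice le G (E i)) :
  S_nice le G (ideal_bigcap E) /\
  ((forall i j, G_nice le (E i) (E j)) -> S_nice le G (ideal_bigsum E)).
Proof.
split; first exact: parta.
move=> HN; exact: (partb Hle HE HN HS).
Qed.
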